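(* Let $G$ be a finite group. If there exists $g\in G$ whose order is divisible by at least three distinct primes, then $\mathcal{I}(G)=\emptyset$ and the diameter of $\Gamma(G)$ is at most $2$.
   Context: For a finite group $G$, let $\widetilde{\Gamma}(G)$ be the graph with vertex set $G$ in which two distinct elements $x,y$ are adjacent if and only if $|\langle x,y\rangle|$ is divisible by at least three distinct primes. $\mathcal{I}(G)$ denotes the set of isolated vertices of $\widetilde{\Gamma}(G)$, and $\Gamma(G)$ is the subgraph of $\widetilde{\Gamma}(G)$ induced on $G\setminus\mathcal{I}(G)$. *)

(* Defs.v *)
From mathcomp Require Import all_boot all_fingroup.
Set Implicit Arguments. Unset Strict Implicit. Unset Printing Implicit Defensive.
Local Open Scope group_scope.

(* Edge relation of the graph \widetilde{Gamma}(G): distinct x, y are adjacent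
   iff |<x,y>| is divisible by at least three distinct primes. *)
Definition tadj (gT : finGroupType) (x y : gT) : bool :=
  (x != y) && (2 < size (primes #|<<[set x; y]>>|))%N.

Definition isolated_vertices (gT : finGroupType) (G : {set gT}) : {set gT} :=
  [set x in G | [forall y in G, ~~ tadj x y]].

(* Vertex set of Gamma(G) = G \ I(G) (induced subgraph of \widetilde{Gamma}). *)
Definition Gamma_vertices (gT : finGroupType) (G : {set gT}) : {set gT} :=
  G :\: isolated_vertices G.

Definition Gamma_diam_le2 (gT : finGroupType) (G : {set gT}) : Prop :=
  forall x y, x \in Gamma_vertices G -> y \in Gamma_vertices G -> x != y ->
    tadj x y || [exists z in Gamma_vertices G, tadj x z && tadj z y].

(* Main.v *)
Require Import Defs.
From mathcomp Require Import all_boot all_fingroup.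
Local Open Scope group_scope.

Lemma big_primes (gT : finGroupType) (g x y : gT) :
  g \in [set x; y] -> (2 < size (primes #[g]))%N ->
  (2 < size (primes #|<<[set x; y]>>|))%N.
Proof.
move=> gxy h; apply: (leq_trans h).
have dv : (#[g] %| #|<<[set x; y]>>|)%N.
  by apply: cardSg; rewrite cycle_subG mem_gen.
apply: uniq_leq_size; first exact: primes_uniq.
move=> p; rewrite !mem_primes => /and3P[pp _ pd].
by rewrite pp cardG_gt0 (dvdn_trans pd dv).
Qed.

Theorem lemma2p5 (gT : finGroupType) (G : {group gT}) :
  (exists2 g, g \in G & (2 < size (primes #[g]))%N) ->
  isolated_vertices G = set0 /\ Gamma_diam_le2 G.
Proof.
case=> g gG hg.
have adjg : forall x, x != g -> tadj x g && tadj g x.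
  move=> x xg; rewrite /tadj xg eq_sym xg /=.
  by apply/andP; split; apply: big_primes hg; rewrite !inE eqxx ?orbT.
have g1 : g != 1.
  by apply: contraTneq hg => ->; rewrite order1.
have iso : isolated_vertices G = set0.
  apply/setP=> x; rewrite !inE; apply/negbTE/nandP.
  case xG: (x \in G); [right | by left].
  apply/forallPn; case: (eqVneq x g) => [-> | xg].
    exists 1; rewrite group1 /=; apply/negPn.
    have := adjg 1; rewrite eq_sym g1 => /(_ isT) /andP[_ ->] //.
  by exists g; rewrite gG /=; case/andP: (adjg x xg) => ->.
split=> // x y _ _ xy.
case: (eqVneq x g) xy => [-> | xg] xy.
  by rewrite eq_sym in xy; case/andP: (adjg y xy) => _ ->.
case: (eqVneq y g) xy => [-> | yg] xy.
  by case/andP: (adjg x xg) => ->.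
apply/orP; right; apply/existsP; exists g.
rewrite /Gamma_vertices iso setD0 gG /=.
by case/andP: (adjg x xg) => -> _; case/andP: (adjg y yg) => _ ->.
Qed.
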